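(* There exists a function $f:\mathbb{N}\to\mathbb{N}$ such that for every natural number $k$, no $k$-modular permutation graph contains an induced path with more than $f(k)$ vertices.
   Context: A permutation graph is the intersection graph of the line segments of a permutation diagram: two parallel horizontal lines, points labelled $1,\ldots,n$ on each, and a segment joining the two points with the same label. A module of a graph $G=(V,E)$ is a set $M\subseteq V$ such that every vertex outside $M$ is adjacent either to all vertices of $M$ or to none of them. A module is strong if it does not overlap any other module. The strong modules form the modular decomposition tree of $G$: each internal node $N$ has as children its maximal proper strong submodules $M_1,\ldots,M_m$, with quotient graph $H_N$ on $\{M_1,\ldots,M_m\}$ where $M_i\sim M_j$ iff all edges between $M_i$ and $M_j$ are present; $N$ is a prime node if $H_N$ is neither edgeless nor complete. A graph is $k$-modular if for every prime node $N$ the quotient graph $H_N$ has at most $k$ vertices. *)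

(* Defs.v *)
From mathcomp Require Import all_boot.
Set Implicit Arguments. Unset Strict Implicit. Unset Printing Implicit Defensive.

Section Defs.
Variable T : finType.
Variable e : rel T.

(* Permutation graph: vertex x is the segment joining position p x on the top
   line to position q x on the bottom line (p, q injective, i.e. each vertex
   has its own label/point on each line); two distinct vertices are adjacent
   iff their segments cross, i.e. the two lines order them differently. *)
Definition permutation_graph : Prop :=
  exists (p q : T -> nat), injective p /\ injective q /\
    forall x y : T, e x y = (x != y) && ((p x < p y) != (q x < q y)).

Definition module (M : {set T}) : bool :=
  [forall v, (v \notin M) ==>
     ([forall m in M, e v m] || [forall m in M, ~~ e v m])].

Definition overlap (A B : {set T}) : bool :=
  [&& A :&: B != set0, ~~ (A \subset B) & ~~ (B \subset A)].

Definition strong_module (M : {set T}) : bool :=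
  [&& module M, M != set0 & [forall M' : {set T}, module M' ==> ~~ overlap M M']].

Definition children (N : {set T}) : {set {set T}} :=
  [set M | [&& strong_module M, M \proper N &
     [forall M' : {set T}, (strong_module M' && (M \proper M')) ==> ~~ (M' \proper N)]]].

Definition quot_adj (M1 M2 : {set T}) : bool :=
  (M1 != M2) && [forall x in M1, forall y in M2, e x y].

(* internal node (strong module with >= 2 vertices) whose quotient graph is
   neither edgeless nor complete *)
Definition prime_node (N : {set T}) : bool :=
  [&& strong_module N, 1 < #|N|,
      [exists M1 in children N, exists M2 in children N, quot_adj M1 M2] &
      [exists M1 in children N, exists M2 in children N,
          (M1 != M2) && ~~ quot_adj M1 M2]].

Definition k_modular (k : nat) : Prop :=
  forall N : {set T}, prime_node N -> #|children N| <= k.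

Definition induced_path (s : seq T) : Prop :=
  uniq s /\ forall x y, x \in s -> y \in s ->
    e x y = ((index x s).+1 == index y s) || ((index y s).+1 == index x s).

End Defs.

(* Main.v *)
Require Import Defs.
From mathcomp Require Import all_boot.
From Stdlib Require Import Classical.
Set Implicit Arguments. Unset Strict Implicit. Unset Printing Implicit Defensive.

Section Work.
Variables (T : finType) (e : rel T).

Lemma mod_all (M : {set T}) v w : module e M -> v \notin M -> w \in M -> e v w ->
  forall m, m \in M -> e v m.
Proof.
move=> /forallP /(_ v) /implyP /(_ _) H vM wM evw m mM.
case/orP: (H vM) => /forall_inP H2; first exact: H2.
by move: (H2 w wM); rewrite evw.
Qed.

Lemma L_nb (s : seq T) M v w : induced_path e s -> module e M -> v \in s -> v \notin M ->
  w \in s -> w \in M -> e v w ->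
  forall m, m \in s -> m \in M -> m = nth v s (index v s).+1 \/ m = nth v s (index v s).-1.
Proof.
move=> [us Hs] HM vs vM ws wM evw m ms mM.
have := mod_all HM vM wM evw mM; rewrite Hs //.
case/orP=> /eqP H; [left; rewrite H | right; rewrite -H /=]; by rewrite nth_index.
Qed.

Lemma L_path (s : seq T) M y : induced_path e s -> module e M -> y \in s -> y \notin M ->
  exists a b, forall m, m \in s -> m \in M -> m = a \/ m = b.
Proof.
move=> Hp HM ys yM.
case: (boolP (has (mem M) s)); last first.
  move/hasPn=> H; exists y, y => m ms mM; by move: (H m ms); rewrite /= mM.
case/hasP=> x xs xM.
have [i [Hi Hne]] : exists i, i.+1 < size s /\ (nth x s i \in M) != (nth x s i.+1 \in M).
  apply: NNPP => H.
  have H' : forall i, i.+1 < size s -> (nth x s i \in M) = (nth x s i.+1 \in M).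
    move=> i Hi; case E: ((nth x s i \in M) == (nth x s i.+1 \in M)); first exact/eqP.
    exfalso; apply: H; exists i; by rewrite Hi E.
  have H0 : forall i, i < size s -> (nth x s i \in M) = (nth x s 0 \in M).
    elim=> [//|i IH] Hi; rewrite -H' //; apply: IH; exact: ltnW.
  move: (H0 (index x s)) (H0 (index y s)); rewrite !index_mem xs ys => /(_ isT) + /(_ isT).
  rewrite !nth_index // => Hx Hy; have xM' : x \in M := xM; by move: yM; rewrite Hy -Hx xM'.
have [us Hs] := Hp.
have Hi' : i < size s by apply: ltnW.
have ui : index (nth x s i) s = i by apply: index_uniq.
have ui1 : index (nth x s i.+1) s = i.+1 by apply: index_uniq.
have m1 : nth x s i \in s by apply: mem_nth.
have m2 : nth x s i.+1 \in s by apply: mem_nth.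
have e12 : e (nth x s i) (nth x s i.+1) by rewrite Hs // ui ui1 eqxx.
have e21 : e (nth x s i.+1) (nth x s i) by rewrite Hs // ui ui1 eqxx orbT.
case: (boolP (nth x s i \in M)) Hne => H1 /=.
  case: (boolP (nth x s i.+1 \in M)) => H2 // _.
  eexists; eexists; exact: (L_nb Hp HM m2 _ m1 H1 e21).
case: (boolP (nth x s i.+1 \in M)) => H2 // _.
eexists; eexists; exact: (L_nb Hp HM m1 H1 m2 H2 e12).
Qed.


Lemma single_strong x : strong_module e [set x].
Proof.
apply/and3P; split.
- apply/forallP=> v; apply/implyP=> _.
  case E: (e v x); [apply/orP; left | apply/orP; right];
    apply/forall_inP=> m; rewrite inE => /eqP ->; by rewrite E.
- by apply/set0Pn; exists x; rewrite inE.
- apply/forallP=> M'; apply/implyP=> _; apply/negP; case/and3P=> /set0Pn [y].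
  rewrite !inE => /andP [/eqP -> yM]; by rewrite sub1set yM.
Qed.

Lemma setT_strong (x : T) : strong_module e [set: T].
Proof.
apply/and3P; split.
- apply/forallP=> v; by rewrite inE.
- by apply/set0Pn; exists x; rewrite inE.
- apply/forallP=> M'; apply/implyP=> _; apply/negP; case/and3P=> _ _.
  by rewrite subsetT.
Qed.

Lemma child_disj (N C1 C2 : {set T}) (x : T) : C1 \in children e N -> C2 \in children e N ->
  x \in C1 -> x \in C2 -> C1 = C2.
Proof.
have key : forall C1 C2, C1 \in children e N -> C2 \in children e N -> C1 \subset C2 -> C1 = C2.
  move=> D1 D2; rewrite !inE => /and3P [_ _ /forallP H1] /and3P [S2 P2 _] sub.
  apply/eqP; apply: contraT => ne.
  have := implyP (H1 D2); rewrite S2 P2 /= => /(_ _); apply.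
  by rewrite properEneq ne sub.
move=> H1 H2 x1 x2.
have := H1; rewrite inE => /and3P [S1 _ _].
have := H2; rewrite inE => /and3P [S2 _ _].
move: S2 => /and3P [M2 _ _].
move: S1 => /and3P [_ _ /forallP /(_ C2)].
move/implyP/(_ M2); rewrite /overlap !negb_and.
case/or3P.
- rewrite negbK => /eqP /setP /(_ x); by rewrite !inE x1 x2.
- rewrite negbK => sub; exact: key.
- rewrite negbK => sub; apply/esym; exact: key.
Qed.

Lemma exist_child (N : {set T}) (x : T) : 1 < #|N| -> x \in N -> exists2 C, C \in children e N & x \in C.
Proof.
move=> HN xN.
have P0 : strong_module e [set x] && (x \in [set x]) && ([set x] \proper N).
  by rewrite single_strong inE eqxx properEcard sub1set xN cards1 HN.
case: (@arg_maxnP _ [set x] (fun M : {set T} => strong_module e M && (x \in M) && (M \proper N)) (fun M : {set T} => #|M|) P0) => M /andP [/andP [SM xM] PM] Hmax.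
exists M => //.
rewrite inE SM PM /=; apply/forallP=> M'; apply/implyP=> /andP [SM' PMM']; apply/negP=> PM'N.
have := Hmax M'; rewrite SM' PM'N (subsetP (proper_sub PMM') _ xM) /= => /(_ isT).
by rewrite leqNgt proper_card.
Qed.


Lemma main_bound k (esym : forall x y, e x y = e y x) : k_modular e k ->
  forall s, induced_path e s -> 4 < size s -> size s <= k * 2.
Proof.
move=> Hk s Hp Hs; have [us Hps] := Hp.
have [x0 _] : {x0 : T | True} by move: Hs; case: (s) => [|a ?] //; exists a.
pose A := [set x in s].
have cA : #|A| = size s by rewrite cardsE; apply/card_uniqP.
pose PN := fun N : {set T} => strong_module e N && (A \subset N).
have P0 : PN setT by rewrite /PN (setT_strong x0) subsetT.
case: (@arg_minnP _ setT PN (fun N => #|N|) P0) => N /andP [SN AN] Hmin.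
have sN : forall x, x \in s -> x \in N by move=> x xs; apply: (subsetP AN); rewrite inE.
have cN : 1 < #|N|.
  apply: leq_trans (subset_leq_card AN); rewrite cA; exact: leq_trans Hs.
have notsub : forall C, C \in children e N -> exists2 y, y \in s & y \notin C.
  move=> C; rewrite inE => /and3P [SC PC _].
  have : ~~ (A \subset C).
    apply/negP => HAC; have := Hmin C; rewrite /PN SC HAC => /(_ isT).
    by rewrite leqNgt proper_card.
  case/subsetPn => y; rewrite inE => ys yC; by exists y.
have fib : forall C, C \in children e N ->
    exists a b, forall m, m \in s -> m \in C -> m = a \/ m = b.
  move=> C HC; have [y ys yC] := notsub C HC.
  move: HC; rewrite inE => /and3P [SC _ _]; move: SC => /and3P [MC _ _].
  exact: L_path Hp MC ys yC.
have three : forall C x y z, C \in children e N -> x \in s -> y \in s -> z \in s ->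
    x \in C -> y \in C -> z \in C -> x = y \/ y = z \/ x = z.
  move=> C x y z HC xs ys zs xC yC zC; have [a [b H]] := fib C HC.
  case: (H x xs xC) => ->; case: (H y ys yC) => ->; case: (H z zs zC) => ->; tauto.
pose g := fun x => odflt set0 [pick C in children e N | x \in C].
have gS : forall x, x \in N -> g x \in children e N /\ x \in g x.
  move=> x xN; rewrite /g; case: pickP => [C /andP [H1 H2] | H] //=.
  exfalso; have [C HC xC] := exist_child cN xN; by move: (H C); rewrite HC xC.
have cnt : #|A| <= #|children e N| * 2.
  rewrite -sum1_card (partition_big (fun x => g x) (mem (children e N))) /=; last first.
    move=> x; rewrite inE => xs; exact: (gS x (sN x xs)).1.
  rewrite -sum_nat_const; apply: leq_sum => C HC.
  rewrite sum1dep_card.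
  have [a [b H]] := fib C HC.
  apply: leq_trans (_ : #|[set a; b]| <= 2); last by rewrite cards2 ltnS leq_b1.
  apply: subset_leq_card; apply/subsetP => x; rewrite !inE => /andP [xs /eqP gx].
  have xC : x \in C by rewrite -gx; exact: (gS x (sN x xs)).2.
  by case: (H x xs xC) => ->; rewrite eqxx ?orbT.
have modC : forall C, C \in children e N -> module e C.
  by move=> C; rewrite inE => /and3P [SC _ _]; move: SC => /and3P [].
have adj : forall x y, x \in s -> y \in s -> g x != g y -> e x y -> quot_adj e (g x) (g y).
  move=> x y xs ys ne exy.
  have [Cx xCx] := gS x (sN x xs); have [Cy yCy] := gS y (sN y ys).
  have yn : y \notin g x.
    apply/negP => yx; move/eqP: ne; apply; exact: child_disj Cx Cy yx yCy.
  rewrite /quot_adj ne /=; apply/forall_inP => a aC; apply/forall_inP => b bC.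
  have ea : e y a by apply: (mod_all (modC _ Cx) yn xCx) => //; rewrite esym.
  have an : a \notin g y.
    apply/negP => ay; move/eqP: ne; apply; exact: child_disj Cx Cy aC ay.
  by apply: (mod_all (modC _ Cy) an yCy) => //; rewrite esym.
have nadj : forall x y, x \in s -> y \in s -> ~~ e x y -> ~~ quot_adj e (g x) (g y).
  move=> x y xs ys nexy; apply/negP; case/andP => _ /forall_inP.
  move/(_ x (gS x (sN x xs)).2) => /forall_inP /(_ y (gS y (sN y ys)).2).
  by rewrite (negbTE nexy).
pose si := fun i => nth x0 s i.
have siS : forall i, i < size s -> si i \in s by move=> i Hi; apply: mem_nth.
have siI : forall i, i < size s -> index (si i) s = i by move=> i Hi; apply: index_uniq.
have esi : forall i j, i < size s -> j < size s -> e (si i) (si j) = (i.+1 == j) || (j.+1 == i).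
  by move=> i j Hi Hj; rewrite Hps ?siS // !siI.
have sid : forall i j, i < size s -> j < size s -> si i = si j -> i = j.
  by move=> i j Hi Hj E; rewrite -(siI i Hi) -(siI j Hj) E.
have L0 : 0 < size s by apply: leq_trans Hs.
have L1 : 1 < size s by apply: leq_trans Hs.
have L2 : 2 < size s by apply: leq_trans Hs.
have L3 : 3 < size s by apply: leq_trans Hs.
have L4 : 4 < size s by [].
have trip : forall i j l, i < size s -> j < size s -> l < size s -> i != j -> j != l -> i != l ->
    g (si i) = g (si j) -> g (si j) = g (si l) -> False.
  move=> i j l Hi Hj Hl nij njl nil E1 E2.
  have [Ci iC] := gS _ (sN _ (siS i Hi)).
  have jC : si j \in g (si i) by rewrite E1; exact: (gS _ (sN _ (siS j Hj))).2.
  have lC : si l \in g (si i) by rewrite E1 E2; exact: (gS _ (sN _ (siS l Hl))).2.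
  case: (three _ _ _ _ Ci (siS i Hi) (siS j Hj) (siS l Hl) iC jC lC) => [/sid|[/sid|/sid]].
  - by move=> /(_ Hi Hj) /eqP; rewrite (negbTE nij).
  - by move=> /(_ Hj Hl) /eqP; rewrite (negbTE njl).
  - by move=> /(_ Hi Hl) /eqP; rewrite (negbTE nil).
have Hprime : prime_node e N.
  rewrite /prime_node SN cN /=; apply/andP; split.
  - have wit : forall i j, i < size s -> j < size s -> g (si i) != g (si j) -> e (si i) (si j) ->
        [exists M1 in children e N, exists M2 in children e N, quot_adj e M1 M2].
      move=> i j Hi Hj ne eij; apply/exists_inP; exists (g (si i)).
        exact: (gS _ (sN _ (siS i Hi))).1.
      apply/exists_inP; exists (g (si j)); first exact: (gS _ (sN _ (siS j Hj))).1.
      exact: adj (siS i Hi) (siS j Hj) ne eij.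
    case: (boolP (g (si 0) == g (si 1))) => E1; last by apply: (wit 0 1) => //; rewrite esi.
    case: (boolP (g (si 1) == g (si 2))) => E2; last by apply: (wit 1 2) => //; rewrite esi.
    by exfalso; apply: (trip 0 1 2) => //; apply/eqP.
  - have wit : forall i j, i < size s -> j < size s -> g (si i) != g (si j) -> ~~ e (si i) (si j) ->
        [exists M1 in children e N, exists M2 in children e N, (M1 != M2) && ~~ quot_adj e M1 M2].
      move=> i j Hi Hj ne eij; apply/exists_inP; exists (g (si i)).
        exact: (gS _ (sN _ (siS i Hi))).1.
      apply/exists_inP; exists (g (si j)); first exact: (gS _ (sN _ (siS j Hj))).1.
      by rewrite ne (nadj _ _ (siS i Hi) (siS j Hj) eij).
    case: (boolP (g (si 0) == g (si 2))) => E1; last by apply: (wit 0 2) => //; rewrite esi.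
    case: (boolP (g (si 2) == g (si 4))) => E2; last by apply: (wit 2 4) => //; rewrite esi.
    by exfalso; apply: (trip 0 2 4) => //; apply/eqP.
rewrite -cA; apply: leq_trans cnt _; rewrite leq_mul2r /=; exact: Hk.
Qed.

End Work.

Theorem mainTheorem18 :
  exists f : nat -> nat, forall (k : nat) (T : finType) (e : rel T),
    permutation_graph e -> k_modular e k ->
    forall s : seq T, induced_path e s -> size s <= f k.
Proof.
exists (fun k => k * 2 + 4) => k T e [p [q [ip [iq He]]]] Hk s Hp.
have esym : forall x y, e x y = e y x.
  move=> x y; rewrite !He eq_sym; case: (eqVneq y x) => [//|nyx] /=.
  have npq : p x != p y by apply: contra nyx => /eqP /ip ->.
  have nqq : q x != q y by apply: contra nyx => /eqP /iq ->.
  have h1 : (p y < p x) = ~~ (p x < p y) by rewrite ltnNge leq_eqVlt (negbTE npq).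
  have h2 : (q y < q x) = ~~ (q x < q y) by rewrite ltnNge leq_eqVlt (negbTE nqq).
  by rewrite h1 h2; case: (p x < p y); case: (q x < q y).
case: (leqP (size s) 4) => Hs; first exact: leq_trans Hs (leq_addl _ _).
exact: leq_trans (main_bound esym Hk Hp Hs) (leq_addr _ _).
Qed.
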